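(* Let $g:\{\pm1\}^{m_1}\times\{\pm1\}^{m_2}\to\{\pm1\}$ be a gadget with $\hat g(S,T)=0$ whenever $S=\emptyset$ or $T=\emptyset$. Let $\mathcal{C}:(\{\pm1\}^{m_1})^n\times(\{\pm1\}^{m_2})^n\to[-1,1]$ be a randomized two-party protocol and $\mathcal{C}_{\downarrow g}$ its $g$-fiber. Then for every $I\subseteq[n]$, $$\widehat{\mathcal{C}_{\downarrow g}}(I)=\sum_{\substack{S^I,T^I\\ S_i\ne\emptyset,\,T_i\ne\emptyset\ \forall i\in I}}\hat{\mathcal{C}}(S^I,T^I)\prod_{i\in I}\hat g(S_i,T_i).$$
   Context: Fourier coefficients of the gadget: $\hat g(S,T)=\mathbb{E}[g(\mathbf{x},\mathbf{y})\prod_{j\in S}\mathbf{x}_j\prod_{j\in T}\mathbf{y}_j]$ for $S\subseteq[m_1],T\subseteq[m_2]$ and $\mathbf{x},\mathbf{y}$ uniform. A randomized protocol $\mathcal{C}$ is identified with the function $(x,y)\mapsto$ its expected output over internal randomness. Inputs $x\in(\{\pm1\}^{m_1})^n$ consist of blocks $x_1,\dots,x_n\in\{\pm1\}^{m_1}$, similarly for $y$. For tuples $S^{[n]}=(S_i)_{i\in[n]}$ with $S_i\subseteq[m_1]$ and $T^{[n]}=(T_i)_{i\in[n]}$ with $T_i\subseteq[m_2]$, $\hat{\mathcal{C}}(S^{[n]},T^{[n]})=\mathbb{E}[\mathcal{C}(\mathbf{x},\mathbf{y})\prod_i\prod_{j\in S_i}\mathbf{x}_{i,j}\prod_i\prod_{j\in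 T_i}\mathbf{y}_{i,j}]$ for uniform $\mathbf{x},\mathbf{y}$. $S^I,T^I$ denote such tuples with $S_j=T_j=\emptyset$ for all $j\notin I$. The $g$-fiber is $\mathcal{C}_{\downarrow g}(z)=\mathbb{E}[\mathcal{C}(\mathbf{x},\mathbf{y})\mid g(\mathbf{x}_i,\mathbf{y}_i)=z_i\ \forall i]$ for $z\in\{\pm1\}^n$, with $\mathbf{x},\mathbf{y}$ uniform, and $\widehat{\mathcal{C}_{\downarrow g}}(I)=\mathbb{E}_{\mathbf z}[\mathcal{C}_{\downarrow g}(\mathbf z)\prod_{i\in I}\mathbf z_i]$ for uniform $\mathbf z\in\{\pm1\}^n$. *)

(* Defs.v *)
(* Boolean encoding of {+-1}: b : bool stands for pm b,
   with pm false = 1, pm true = -1. *)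
From HB Require Import structures.
From mathcomp Require Import all_boot all_order all_algebra.
Set Implicit Arguments. Unset Strict Implicit. Unset Printing Implicit Defensive.
Import Order.TTheory GRing.Theory Num.Theory.
Local Open Scope ring_scope.

Definition pm {R : ringType} (b : bool) : R := if b then -1 else 1.

Definition Exp {R : fieldType} {T : finType} (f : T -> R) : R :=
  (\sum_(t : T) f t) / #|{: T}|%:R.

Notation cube m := {ffun 'I_m -> bool}.
Notation blocks n m := {ffun 'I_n -> cube m}.

Definition chi {R : ringType} {m : nat} (S : {set 'I_m}) (x : cube m) : R :=
  \prod_(j in S) pm (x j).

Definition ghat {R : fieldType} {m1 m2 : nat}
    (g : cube m1 -> cube m2 -> bool) (S : {set 'I_m1}) (T : {set 'I_m2}) : R :=
  Exp (fun xy : cube m1 * cube m2 =>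
         pm (g xy.1 xy.2) * chi S xy.1 * chi T xy.2).

Definition Chat {R : fieldType} {n m1 m2 : nat}
    (C : blocks n m1 -> blocks n m2 -> R)
    (S : {ffun 'I_n -> {set 'I_m1}}) (T : {ffun 'I_n -> {set 'I_m2}}) : R :=
  Exp (fun xy : blocks n m1 * blocks n m2 =>
         C xy.1 xy.2 * (\prod_(i < n) chi (S i) (xy.1 i))
                     * (\prod_(i < n) chi (T i) (xy.2 i))).

Definition gfiber {R : fieldType} {n m1 m2 : nat}
    (g : cube m1 -> cube m2 -> bool) (C : blocks n m1 -> blocks n m2 -> R)
    (z : {ffun 'I_n -> bool}) : R :=
  let ev := fun xy : blocks n m1 * blocks n m2 =>
              [forall i, g (xy.1 i) (xy.2 i) == z i] in
  (\sum_(xy | ev xy) C xy.1 xy.2) / #|[pred xy | ev xy]|%:R.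

Definition gfiber_hat {R : fieldType} {n m1 m2 : nat}
    (g : cube m1 -> cube m2 -> bool) (C : blocks n m1 -> blocks n m2 -> R)
    (I : {set 'I_n}) : R :=
  Exp (fun z : {ffun 'I_n -> bool} => gfiber g C z * \prod_(i in I) pm (z i)).

(* Main.v *)
Require Import Defs.
From HB Require Import structures.
From mathcomp Require Import all_boot all_order all_algebra.
From mathcomp Require Import ring.
Import Order.TTheory GRing.Theory Num.Theory.
Local Open Scope ring_scope.

Set Implicit Arguments. Unset Strict Implicit. Unset Printing Implicit Defensive.

Lemma pmN {R : ringType} (b : bool) : pm (~~ b) = - pm b :> R.
Proof. by case: b; rewrite /pm ?opprK. Qed.

Lemma pm2 {R : ringType} (b : bool) : pm b * pm b = 1 :> R.
Proof. by case: b; rewrite /pm ?mulrNN mulr1. Qed.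

Lemma chi0 {R : ringType} m (x : cube m) : chi set0 x = 1 :> R.
Proof. by rewrite /chi big_set0. Qed.

Lemma subset_exp (R : comRingType) k (c : 'I_k -> R) :
  \prod_(i < k) (c i + 1) = \sum_(J : {set 'I_k}) \prod_(i in J) c i.
Proof.
rewrite bigA_distr; apply: congr_big => // J; rewrite -big_mkcond //.
Qed.

Lemma cube_ortho (R : comRingType) k (a b : {ffun 'I_k -> bool}) :
  \prod_(i < k) (pm (a i) * pm (b i) + 1) = if a == b then 2%:R ^+ k else 0 :> R.
Proof.
case: eqP => [->|neq].
  rewrite (eq_bigr (fun _ => 2%:R)) ?prodr_const ?card_ord // => i _.
  by rewrite pm2.
have : ~~ [forall i, a i == b i].
  by apply/negP => /forallP h; apply: neq; apply/ffunP => i; apply/eqP.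
rewrite negb_forall => /existsP [i hi].
rewrite (bigD1 i) //=.
by move: hi; case: (a i); case: (b i) => //= _; rewrite /pm ?mulrN1 ?mulN1r addNr mul0r.
Qed.

Lemma card_cube m : #|{: cube m}| = (2 ^ m)%N.
Proof. by rewrite card_ffun card_bool card_ord. Qed.

Lemma chi_ortho (R : comRingType) m (x a : cube m) :
  \sum_(S : {set 'I_m}) chi S x * chi S a = if x == a then 2%:R ^+ m else 0 :> R.
Proof.
rewrite -cube_ortho subset_exp; apply: eq_bigr => S _.
by rewrite /chi -big_split.
Qed.

Section S.
Variables (R : realFieldType) (m1 m2 : nat) (g : cube m1 -> cube m2 -> bool).

Lemma gfour (a : cube m1) (b : cube m2) :
  pm (g a b) = \sum_(S : {set 'I_m1}) \sum_(T : {set 'I_m2})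
                 ghat (R := R) g S T * chi S a * chi T b.
Proof.
pose M : R := #|{: cube m1 * cube m2}|%:R.
have hM : M = 2%:R ^+ m1 * 2%:R ^+ m2 :> R.
  by rewrite /M card_prod !card_cube natrM !natrX.
have hM0 : M != 0 by rewrite hM mulf_neq0 // expf_neq0 // pnatr_eq0.
transitivity (\sum_(xy : cube m1 * cube m2) pm (g xy.1 xy.2) / M *
   (\sum_(S : {set 'I_m1}) chi S xy.1 * chi S a) *
   (\sum_(T : {set 'I_m2}) chi T xy.2 * chi T b)).
  rewrite (bigD1 (a, b)) //= [X in _ + X]big1 ?addr0.
    rewrite !chi_ortho !eqxx /= hM; field.
    by apply/andP; split; apply: expf_neq0; rewrite pnatr_eq0.
  move=> [x y] /=; rewrite xpair_eqE negb_and !chi_ortho.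
  by case/orP => /negbTE ->; rewrite ?mulr0 ?mul0r.
rewrite /ghat /Exp -/M.
under [RHS]eq_bigr => S _ do under eq_bigr => T _ do rewrite !mulr_suml.
rewrite exchange_big /=; under [RHS]eq_bigr => T _ do rewrite exchange_big /=.
rewrite exchange_big /=; apply: eq_bigr => xy _.
rewrite mulr_sumr; apply: eq_bigr => T _; rewrite mulr_sumr mulr_suml; apply: eq_bigr => S _.
ring.
Qed.
End S.

Section S2.
Variables (R : realFieldType) (n m1 m2 : nat) (g : cube m1 -> cube m2 -> bool).
Hypothesis hg : forall (S : {set 'I_m1}) (T : {set 'I_m2}),
        (S == set0) || (T == set0) -> ghat (R := R) g S T = 0.

Lemma gexp (a : cube m1) (b : cube m2) :
  pm (g a b) = \sum_(P : {set 'I_m1} * {set 'I_m2} | (P.1 != set0) && (P.2 != set0))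
                 ghat (R := R) g P.1 P.2 * chi P.1 a * chi P.2 b.
Proof.
rewrite gfour pair_bigA /= [RHS]big_mkcond /=; apply: eq_bigr => [[S T]] _ /=.
case: ifP => // /negbT; rewrite negb_and !negbK => h.
by rewrite hg // mul0r mul0r.
Qed.

Lemma charsum0 (S : {ffun 'I_n -> {set 'I_m1}}) (T : {ffun 'I_n -> {set 'I_m2}}) i j :
  j \in S i ->
  \sum_(xy : blocks n m1 * blocks n m2)
     (\prod_(k < n) chi (S k) (xy.1 k)) * (\prod_(k < n) chi (T k) (xy.2 k)) = 0 :> R.
Proof.
move=> hj.
pose fl (x : blocks n m1) : blocks n m1 :=
  [ffun k => if k == i then [ffun l => if l == j then ~~ x i l else x i l] else x k].
have flK : involutive fl.
  move=> x; apply/ffunP => k; rewrite !ffunE; case: eqP => [->|//].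
  apply/ffunP => l; rewrite !ffunE eqxx !ffunE; case: eqP => _; rewrite ?negbK //.
have hfl x : \prod_(k < n) chi (S k) (fl x k) = - \prod_(k < n) chi (S k) (x k) :> R.
  rewrite (bigD1 i) //= [in RHS](bigD1 i) //= -mulNr; congr (_ * _).
    rewrite ffunE eqxx /chi (bigD1 j) //= [in RHS](bigD1 j) //= ffunE eqxx pmN mulNr.
    by congr (- (_ * _)); apply: eq_bigr => l /andP [_ hl]; rewrite ffunE (negbTE hl).
  by apply: eq_bigr => k hk; rewrite ffunE (negbTE hk).
set F := (X in X = 0).
have hF : F = - F.
  have hinv : involutive (fun xy : blocks n m1 * blocks n m2 => (fl xy.1, xy.2)).
    by move=> [x y] /=; rewrite flK.
  rewrite {1}/F (reindex_inj (inv_inj hinv)) /F -sumrN; apply: eq_bigr => xy _ /=.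
  by rewrite hfl mulNr.
by move: hF => /eqP; rewrite -subr_eq0 opprK -mulr2n mulrn_eq0 /= => /eqP.
Qed.

Definition cons (J : {set 'I_n}) (S : {ffun 'I_n -> {set 'I_m1}})
  (T : {ffun 'I_n -> {set 'I_m2}}) : bool :=
  [forall i, if i \in J then (S i != set0) && (T i != set0)
             else (S i == set0) && (T i == set0)].

Lemma L1 (D : blocks n m1 * blocks n m2 -> R) (J : {set 'I_n}) :
  \sum_(xy : blocks n m1 * blocks n m2) D xy * \prod_(i in J) pm (g (xy.1 i) (xy.2 i)) =
  \sum_(S : {ffun 'I_n -> {set 'I_m1}}) \sum_(T : {ffun 'I_n -> {set 'I_m2}} | cons J S T)
    (\sum_(xy : blocks n m1 * blocks n m2) D xy * (\prod_(i < n) chi (S i) (xy.1 i))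
        * (\prod_(i < n) chi (T i) (xy.2 i))) * \prod_(i in J) ghat g (S i) (T i).
Proof.
pose Q (i : 'I_n) (P : {set 'I_m1} * {set 'I_m2}) : bool :=
  if i \in J then (P.1 != set0) && (P.2 != set0) else (P.1 == set0) && (P.2 == set0).
pose F (xy : blocks n m1 * blocks n m2) (i : 'I_n) (P : {set 'I_m1} * {set 'I_m2}) : R :=
  (if i \in J then ghat g P.1 P.2 else 1) * chi P.1 (xy.1 i) * chi P.2 (xy.2 i).
have e1 (xy : blocks n m1 * blocks n m2) : \prod_(i in J) pm (g (xy.1 i) (xy.2 i)) =
             \sum_(f in family Q) \prod_i F xy i (f i).
  rewrite -bigA_distr_big_dep big_mkcond; apply: eq_bigr => i _; rewrite /Q /F.
  case: (i \in J); first by rewrite gexp.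
  rewrite (big_pred1 (set0, set0)) ?chi0 ?mulr1 // => -[S T].
pose h (p : {ffun 'I_n -> {set 'I_m1}} * {ffun 'I_n -> {set 'I_m2}}) :
  {ffun 'I_n -> {set 'I_m1} * {set 'I_m2}} := [ffun i => (p.1 i, p.2 i)].
have e2 (H : {ffun 'I_n -> {set 'I_m1} * {set 'I_m2}} -> R) :
  \sum_(f in family Q) H f =
  \sum_(S : {ffun 'I_n -> {set 'I_m1}}) \sum_(T : {ffun 'I_n -> {set 'I_m2}} | cons J S T)
     H (h (S, T)).
  rewrite pair_big_dep /= (reindex h) /=.
    apply: eq_bigl => -[S T] /=.
    apply/familyP/forallP => Hf i; move: (Hf i); rewrite /h ffunE /Q //=.
  exists (fun f => ([ffun i => (f i).1], [ffun i => (f i).2])).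
    by move=> [S T] _ /=; congr pair; apply/ffunP => i; rewrite !ffunE.
  by move=> f _; apply/ffunP => i; rewrite !ffunE; case: (f i).
under eq_bigr => xy _ do rewrite e1 mulr_sumr (e2 (fun f => D xy * \prod_i F xy i (f i))).
rewrite exchange_big; apply: eq_bigr => S _.
rewrite exchange_big; apply: eq_bigr => T _.
rewrite mulr_suml; apply: eq_bigr => xy _.
under eq_bigr => i _ do rewrite /h ffunE /F /=.
rewrite big_split /= big_split /= -big_mkcond /=.
ring.
Qed.
End S2.

Unset Implicit Arguments.


Theorem fact7p4 (R : realFieldType) (n m1 m2 : nat)
    (g : cube m1 -> cube m2 -> bool)
    (hg : forall (S : {set 'I_m1}) (T : {set 'I_m2}),
        (S == set0) || (T == set0) -> ghat (R := R) g S T = 0)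
    (C : blocks n m1 -> blocks n m2 -> R)
    (hC : forall x y, -1 <= C x y <= 1)
    (I : {set 'I_n}) :
  gfiber_hat g C I =
  \sum_(S : {ffun 'I_n -> {set 'I_m1}})
   \sum_(T : {ffun 'I_n -> {set 'I_m2}}
         | [forall i, if i \in I then (S i != set0) && (T i != set0)
                      else (S i == set0) && (T i == set0)])
     Chat C S T * \prod_(i in I) ghat g (S i) (T i).
Proof.
pose N : R := #|{: blocks n m1 * blocks n m2}|%:R.
have N0 : N != 0.
  rewrite pnatr_eq0 -lt0n; apply/card_gt0P.
  by exists ([ffun => [ffun => false]], [ffun => [ffun => false]]).
pose P : R := 2%:R ^+ n.
have P0 : P != 0 by rewrite expf_neq0 // pnatr_eq0.
pose gv (xy : blocks n m1 * blocks n m2) : {ffun 'I_n -> bool} :=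
  [ffun i => g (xy.1 i) (xy.2 i)].
have Phi1 (J : {set 'I_n}) :
  \sum_(xy : blocks n m1 * blocks n m2) \prod_(i in J) pm (g (xy.1 i) (xy.2 i)) =
  if J == set0 then N else 0.
  case: eqP => [->|/eqP hJ].
    under eq_bigr do rewrite big_set0.
    by rewrite sumr_const.
  rewrite (eq_bigr (fun xy : blocks n m1 * blocks n m2 => (fun _ => 1) xy * \prod_(i in J) pm (g (xy.1 i) (xy.2 i))));
    last by move=> xy _; rewrite mul1r.
  rewrite (L1 hg (fun _ => 1)); apply: big1 => S _; apply: big1 => T hT.
  have [i hi] := set0Pn _ hJ.
  move: hT => /forallP /(_ i); rewrite hi => /andP [hS _].
  have [j hj] := set0Pn _ hS.
  apply/eqP; rewrite mulf_eq0; apply/orP; left; apply/eqP.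
  apply: (etrans _ (charsum0 R T hj)); apply: eq_bigr => xy _ /=.
  ring.
have K (z : {ffun 'I_n -> bool}) :
  #|[pred xy : blocks n m1 * blocks n m2 | [forall i, g (xy.1 i) (xy.2 i) == z i]]|%:R
    = N / P.
  apply: (mulIf P0); rewrite divfK //.
  transitivity (\sum_(xy : blocks n m1 * blocks n m2)
                  \prod_(i < n) (pm (z i) * pm (gv xy i) + 1 : R)).
    rewrite (eq_bigr (fun xy : blocks n m1 * blocks n m2 => if [forall i, g (xy.1 i) (xy.2 i) == z i] then P else 0)).
      by rewrite -big_mkcond sumr_const mulr_natl.
    move=> xy _; rewrite cube_ortho; congr (if _ then _ else _).
    apply/eqP/forallP => [-> i|h]; first by rewrite ffunE.
    by apply/ffunP => i; rewrite ffunE; apply/esym/eqP/h.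
  under eq_bigr do rewrite subset_exp.
  rewrite exchange_big /=.
  rewrite (bigD1 set0) //= [X in _ + X]big1 ?addr0.
    under eq_bigr do rewrite big_set0.
    by rewrite sumr_const.
  move=> J hJ; rewrite (eq_bigr (fun xy : blocks n m1 * blocks n m2 =>
     \prod_(i in J) pm (z i) * \prod_(i in J) pm (g (xy.1 i) (xy.2 i)))).
    by rewrite -mulr_sumr Phi1 (negbTE hJ) mulr0.
  by move=> xy _; rewrite -big_split; apply: eq_bigr => i _; rewrite ffunE.
rewrite /gfiber_hat /Exp card_ffun card_bool card_ord natrX -/P.
under eq_bigr => z _ do rewrite /gfiber /= K.
transitivity ((\sum_(z : {ffun 'I_n -> bool})
   (\sum_(xy : blocks n m1 * blocks n m2 | [forall i, g (xy.1 i) (xy.2 i) == z i]) C xy.1 xy.2)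
     * \prod_(i in I) pm (z i)) / N).
  rewrite !mulr_suml; apply: eq_bigr => z _; field.
  by rewrite N0 P0.
transitivity ((\sum_(xy : blocks n m1 * blocks n m2)
    C xy.1 xy.2 * \prod_(i in I) pm (g (xy.1 i) (xy.2 i))) / N).
  congr (_ / _).
  under eq_bigr do rewrite big_mkcond mulr_suml /=.
  rewrite exchange_big; apply: eq_bigr => xy _.
  rewrite (bigD1 (gv xy)) //= [X in _ + X]big1 ?addr0.
    rewrite ifT; last by apply/forallP => i; rewrite ffunE.
    by under eq_bigr do rewrite ffunE.
  move=> z hz; rewrite ifF ?mul0r //; apply/negbTE; apply: contra hz => /forallP h.
  by apply/eqP/ffunP => i; rewrite ffunE; apply/esym/eqP/h.
rewrite (L1 hg (fun xy => C xy.1 xy.2)) mulr_suml; apply: eq_bigr => S _.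
rewrite mulr_suml; apply: eq_bigr => T _.
by rewrite /Chat /Exp mulrAC.
Qed.
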